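(* Let $S$ be a completely simple semigroup definable in $\mathcal{M}$. Then there exist definable sets $I,\Lambda$, a definable group $G$ and a definable map $P:\Lambda\times I\to G$ such that $S$ is definably isomorphic to the Rees matrix semigroup $\mathscr{M}(I,G,\Lambda,P)$.
   Context: $\mathcal{M}$ is a sufficiently saturated o-minimal structure with definable choice; ''definable'' means definable with parameters. A semigroup is simple if it has no proper ideals, and completely simple if it is simple and has a primitive idempotent ($e$ with: $f$ idempotent and $ef=fe=f$ imply $f=e$). For a group $G$, nonempty sets $I,\Lambda$ and $P:\Lambda\times I\to G$, $\mathscr{M}(I,G,\Lambda,P)$ is the set $I\times G\times\Lambda$ with product $(i,g,\lambda)(j,h,\mu)=(i,g\,P(\lambda,j)\,h,\mu)$. *)

(* Defs.v *)
(* Model-theoretic framework for definability in an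
   o-minimal structure, following van den Dries, "Tame topology and o-minimal
   structures", Ch. 1: a structure on a set M is a family (D_n) of Boolean
   algebras of subsets of M^n closed under products, projections, and
   containing the diagonals; "definable" (with parameters) = belonging to D_n. *)
From mathcomp Require Import all_boot.
Set Implicit Arguments.
Unset Strict Implicit.
Unset Printing Implicit Defensive.

Section Framework.
Variable M : Type.

Definition tset (n : nat) := n.-tuple M -> Prop.

Definition tupL m n (z : (m + n).-tuple M) : m.-tuple M :=
  [tuple tnth z (lshift n i) | i < m].
Definition tupR m n (z : (m + n).-tuple M) : n.-tuple M :=
  [tuple tnth z (rshift m i) | i < n].
Definition tcat m n (x : m.-tuple M) (y : n.-tuple M) : (m + n).-tuple M :=
  cat_tuple x y.

Variable D : forall n, tset n -> Prop.

Record is_structure : Prop := {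
  def_ext : forall n (A B : tset n), D A -> (forall x, A x <-> B x) -> D B;
  def_full : forall n, D (fun _ : n.-tuple M => True);
  def_compl : forall n (A : tset n), D A -> D (fun x => ~ A x);
  def_inter : forall n (A B : tset n), D A -> D B -> D (fun x => A x /\ B x);
  def_prod : forall m n (A : tset m) (B : tset n), D A -> D B ->
      D (fun z : (m + n).-tuple M => A (tupL z) /\ B (tupR z));
  def_diag : forall n (i j : 'I_n), D (fun x : n.-tuple M => tnth x i = tnth x j);
  def_proj : forall m n (A : tset (m + n)), D A ->
      D (fun x : m.-tuple M => exists y : n.-tuple M, A (tcat x y))
}.

Variable lt : M -> M -> Prop.

Definition dlo_without_endpoints : Prop :=
  [/\ (forall x, ~ lt x x),
      (forall x y z, lt x y -> lt y z -> lt x z),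
      (forall x y, lt x y \/ x = y \/ lt y x),
      (forall x y, lt x y -> exists z, lt x z /\ lt z y) &
      (forall x, (exists y, lt y x) /\ (exists y, lt x y))].

(* points and (possibly unbounded) open intervals of M; None = infinity *)
Inductive piece := Pt of M | Itv of option M & option M.

Definition in_piece (p : piece) (x : M) : Prop :=
  match p with
  | Pt a => x = a
  | Itv a b => (forall a', a = Some a' -> lt a' x) /\
               (forall b', b = Some b' -> lt x b')
  end.

(* o-minimal structure on (M,<): < is definable, all points are definable
   (definability with parameters), and every definable subset of M is a
   finite union of points and intervals. *)
Definition o_minimal : Prop :=
  [/\ is_structure, dlo_without_endpoints,
      D (fun x : 2.-tuple M => lt (tnth x ord0) (tnth x ord_max)),
      (forall a : M, D (fun x : 1.-tuple M => tnth x ord0 = a)) &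
      (forall A : tset 1, D A -> exists s : seq piece,
          forall x : M, A [tuple x] <-> foldr (fun p P => in_piece p x \/ P) False s)].

Definition def_map m k (dom : tset m) (f : m.-tuple M -> k.-tuple M) : Prop :=
  D (fun z : (m + k).-tuple M => dom (tupL z) /\ tupR z = f (tupL z)).

Definition definable_choice : Prop :=
  forall m n (X : tset (m + n)), D X ->
    let pi := fun x : m.-tuple M => exists y, X (tcat x y) in
    exists f : m.-tuple M -> n.-tuple M,
      [/\ def_map pi f,
          (forall x, pi x -> X (tcat x (f x))) &
          (forall x x', pi x -> pi x' ->
              (forall y, X (tcat x y) <-> X (tcat x' y)) -> f x = f x')].

Definition aleph1_saturated : Prop :=
  forall n (F : nat -> tset n), (forall k, D (F k)) ->
    (forall s : seq nat, exists x, forall k, k \in s -> F k x) ->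
    exists x, forall k, F k x.

Definition definable_semigroup n (S : tset n)
    (mul : n.-tuple M -> n.-tuple M -> n.-tuple M) : Prop :=
  [/\ D S,
      def_map (fun w : (n + n).-tuple M => S (tupL w) /\ S (tupR w))
              (fun w => mul (tupL w) (tupR w)),
      (forall x y, S x -> S y -> S (mul x y)) &
      (forall x y z, S x -> S y -> S z -> mul x (mul y z) = mul (mul x y) z)].

Definition definable_group k (G : tset k)
    (mul : k.-tuple M -> k.-tuple M -> k.-tuple M) : Prop :=
  definable_semigroup G mul /\
  exists e, [/\ G e, (forall g, G g -> mul e g = g /\ mul g e = g) &
                 (forall g, G g -> exists h, G h /\ mul g h = e /\ mul h g = e)].

End Framework.

Section Semigroup.
Variables (T : Type) (S : T -> Prop) (mul : T -> T -> T).

Definition is_ideal (J : T -> Prop) : Prop :=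
  [/\ (exists x, J x), (forall x, J x -> S x) &
      (forall x y, S x -> J y -> J (mul x y) /\ J (mul y x))].

Definition simple_sg : Prop :=
  forall J, is_ideal J -> forall x, S x -> J x.

Definition idempotent (e : T) : Prop := S e /\ mul e e = e.

Definition primitive_idempotent (e : T) : Prop :=
  idempotent e /\
  forall f, idempotent f -> mul e f = f -> mul f e = f -> f = e.

Definition completely_simple : Prop :=
  simple_sg /\ exists e, primitive_idempotent e.
End Semigroup.

(* Main.v *)
Require Import Defs.
From mathcomp Require Import all_boot.
From Stdlib Require Import Classical ClassicalEpsilon.
Set Implicit Arguments. Unset Strict Implicit. Unset Printing Implicit Defensive.

Section DefFw.
Variable M : Type.
Variable D : forall n, tset M n -> Prop.
Hypothesis Hs : is_structure D.

Lemma tnth_tcatL m n (x : m.-tuple M) (y : n.-tuple M) i :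
  tnth (tcat x y) (lshift n i) = tnth x i.
Proof. exact: tnth_lshift. Qed.
Lemma tnth_tcatR m n (x : m.-tuple M) (y : n.-tuple M) i :
  tnth (tcat x y) (rshift m i) = tnth y i.
Proof. exact: tnth_rshift. Qed.
Lemma tnth_tupL m n (z : (m+n).-tuple M) i : tnth (tupL z) i = tnth z (lshift n i).
Proof. by rewrite /tupL tnth_mktuple. Qed.
Lemma tnth_tupR m n (z : (m+n).-tuple M) i : tnth (tupR z) i = tnth z (rshift m i).
Proof. by rewrite /tupR tnth_mktuple. Qed.
Lemma tupL_tcat m n (x : m.-tuple M) (y : n.-tuple M) : tupL (tcat x y) = x.
Proof. by apply: eq_from_tnth => i; rewrite tnth_tupL tnth_tcatL. Qed.
Lemma tupR_tcat m n (x : m.-tuple M) (y : n.-tuple M) : tupR (tcat x y) = y.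
Proof. by apply: eq_from_tnth => i; rewrite tnth_tupR tnth_tcatR. Qed.
Lemma tcat_eq m n (z : (m+n).-tuple M) x y :
  z = tcat x y <-> tupL z = x /\ tupR z = y.
Proof.
split; first by move=> ->; rewrite tupL_tcat tupR_tcat.
case=> <- <-; apply: eq_from_tnth => i.
rewrite -(splitK i); case: (split i) => j /=.
  by rewrite tnth_tcatL tnth_tupL.
by rewrite tnth_tcatR tnth_tupR.
Qed.

Lemma extD n (A B : tset M n) : D A -> (forall x, A x <-> B x) -> D B.
Proof. exact: (def_ext Hs). Qed.

Definition blk m k (x : m.-tuple M) (b : 'I_k -> 'I_m) : k.-tuple M :=
  [tuple tnth x (b j) | j < k].
Definition BM m k (F : m.-tuple M -> k.-tuple M) := exists b, forall x, F x = blk x b.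

Lemma BM_id m : BM (fun x : m.-tuple M => x).
Proof. by exists id => x; apply: eq_from_tnth => j; rewrite tnth_mktuple. Qed.
Lemma BM_tupL k m n (F : k.-tuple M -> (m+n).-tuple M) : BM F -> BM (fun x => tupL (F x)).
Proof.
case=> b Hb; exists (fun j => b (lshift n j)) => x.
by apply: eq_from_tnth => j; rewrite tnth_tupL Hb !tnth_mktuple.
Qed.
Lemma BM_tupR k m n (F : k.-tuple M -> (m+n).-tuple M) : BM F -> BM (fun x => tupR (F x)).
Proof.
case=> b Hb; exists (fun j => b (rshift m j)) => x.
by apply: eq_from_tnth => j; rewrite tnth_tupR Hb !tnth_mktuple.
Qed.
Lemma BM_tcat k m n (F1 : k.-tuple M -> m.-tuple M) (F2 : k.-tuple M -> n.-tuple M) :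
  BM F1 -> BM F2 -> BM (fun x => tcat (F1 x) (F2 x)).
Proof.
case=> b1 H1 [b2 H2].
exists (fun j => match split j with inl a => b1 a | inr c => b2 c end) => x.
apply: eq_from_tnth => j; rewrite tnth_mktuple.
rewrite -(splitK j); case: (split j) => a /=.
  by rewrite -[lshift n a]/(unsplit (inl a)) unsplitK tnth_tcatL H1 tnth_mktuple.
by rewrite -[rshift m a]/(unsplit (inr a)) unsplitK tnth_tcatR H2 tnth_mktuple.
Qed.

Lemma trueD m : D (fun _ : m.-tuple M => True).
Proof. exact: (def_full Hs). Qed.
Lemma andD m (A B : tset M m) : D A -> D B -> D (fun x => A x /\ B x).
Proof. exact: (def_inter Hs). Qed.
Lemma notD m (A : tset M m) : D A -> D (fun x => ~ A x).
Proof. exact: (def_compl Hs). Qed.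

Lemma fin_inter m k (P : 'I_k -> tset M m) :
  (forall j, D (P j)) -> D (fun x => forall j, P j x).
Proof.
move=> H.
have: forall s : seq 'I_k, D (fun x => forall j, j \in s -> P j x).
  elim=> [|j s IH].
    by apply: extD (def_full Hs m) _ => x; split => // _ j; rewrite in_nil.
  apply: extD (def_inter Hs (H j) IH) _ => x; split.
    case=> Pj Hs' j'; rewrite in_cons; case/orP => [/eqP->|] //; exact: Hs'.
  move=> H'; split; first by apply: H'; rewrite mem_head.
  by move=> j' hj; apply: H'; rewrite in_cons hj orbT.
move/(_ (enum 'I_k)) => H'; apply: extD H' _ => x; split => H2 j.
  by apply: H2; rewrite mem_enum.
by move=> _; apply: H2.
Qed.

Lemma pullD m k (A : tset M k) (F : m.-tuple M -> k.-tuple M) :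
  D A -> BM F -> D (fun x => A (F x)).
Proof.
move=> HA [b Hb].
pose B := fun z : (m + k).-tuple M => (True /\ A (tupR z)) /\
   (forall j : 'I_k, tnth z (rshift m j) = tnth z (lshift k (b j))).
have HB : D B.
  rewrite /B; apply: (def_inter Hs).
    exact: (def_prod Hs (def_full Hs m) HA).
  by apply: fin_inter => j; apply: def_diag.
apply: extD (def_proj Hs HB) _ => x; split.
  case=> y [[_ Hy] Hd]; rewrite tupR_tcat in Hy.
  suff -> : F x = y by [].
  rewrite Hb; apply: eq_from_tnth => j; move: (Hd j).
  by rewrite tnth_tcatR tnth_tcatL tnth_mktuple => ->.
move=> HF; exists (F x); split; first by rewrite tupR_tcat.
by move=> j; rewrite tnth_tcatR tnth_tcatL Hb tnth_mktuple.
Qed.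

Lemma exD m n (Q : m.-tuple M -> n.-tuple M -> Prop) :
  D (fun z : (m+n).-tuple M => Q (tupL z) (tupR z)) -> D (fun x => exists y, Q x y).
Proof.
move=> H; apply: (extD (def_proj Hs H)) => x; split; case=> y Hy; exists y.
  by move: Hy; rewrite tupL_tcat tupR_tcat.
by rewrite tupL_tcat tupR_tcat.
Qed.

Hypothesis Hpt : forall a : M, D (fun x : 1.-tuple M => tnth x ord0 = a).

Lemma ptD n (c : n.-tuple M) : D (fun x : n.-tuple M => x = c).
Proof.
have H : D (fun x : n.-tuple M => forall j : 'I_n, tnth x j = tnth c j).
  apply: fin_inter => j.
  have := pullD (F := fun x : n.-tuple M => blk x (fun _ : 'I_1 => j)) (Hpt (tnth c j)).
  have HF : BM (fun x : n.-tuple M => blk x (fun _ : 'I_1 => j)).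
    by exists (fun _ => j).
  move/(_ HF) => H1; apply: (extD H1) => x; by rewrite tnth_mktuple.
apply: extD H _ => x; split; first exact: eq_from_tnth.
by move=> ->.
Qed.

Lemma eqcD m n (F : m.-tuple M -> n.-tuple M) c : BM F -> D (fun x => F x = c).
Proof. by move=> HF; apply: (pullD (ptD c) HF). Qed.

Lemma mulD n (S : tset M n) (f : n.-tuple M -> n.-tuple M -> n.-tuple M) m
  (F1 F2 F3 : m.-tuple M -> n.-tuple M) :
  D (fun z : ((n+n)+n).-tuple M => (S (tupL (tupL z)) /\ S (tupR (tupL z))) /\
        tupR z = f (tupL (tupL z)) (tupR (tupL z))) ->
  BM F1 -> BM F2 -> BM F3 ->
  D (fun x => S (F1 x) /\ S (F2 x) /\ F3 x = f (F1 x) (F2 x)).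
Proof.
move=> HG H1 H2 H3.
have HF : BM (fun x => tcat (tcat (F1 x) (F2 x)) (F3 x)).
  by apply: BM_tcat => //; apply: BM_tcat.
apply: extD (pullD HG HF) _ => x.
rewrite !tupL_tcat !tupR_tcat ?tupL_tcat; split; [case; case=> ? ? -> | case=> ? [? ->]] => //.
Qed.

End DefFw.
Section Alg.
Variables (T : Type) (S : T -> Prop) (mul : T -> T -> T).
Local Infix "**" := mul (at level 40, left associativity).
Hypothesis Hcl : forall x y, S x -> S y -> S (x ** y).
Hypothesis Has : forall x y z, S x -> S y -> S z -> x ** (y ** z) = x ** y ** z.
Hypothesis Hsimp : simple_sg S mul.
Variable e : T.
Hypothesis He : primitive_idempotent S mul e.

Hint Resolve Hcl : core.

Lemma Se : S e. Proof. by case: He => [[]]. Qed.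
Lemma ee : e ** e = e. Proof. by case: He => [[]]. Qed.
Hint Resolve Se : core.

Ltac sS := solve [repeat apply: Hcl; auto].
Ltac asc := rewrite ?Has; try sS; try reflexivity.

Lemma prim f : S f -> f ** f = f -> e ** f = f -> f ** e = f -> f = e.
Proof. by move=> *; case: He => _; apply. Qed.

Lemma SxS a x : S a -> S x -> exists u v, [/\ S u, S v & x = u ** a ** v].
Proof.
move=> Sa Sx; apply: (Hsimp (J := fun x => exists u v, [/\ S u, S v & x = u ** a ** v])) => //.
split.
- by exists (a ** a ** a), a, a; split.
- by move=> y [u [v [Su Sv ->]]]; auto.
- move=> s y Ss [u [v [Su Sv ->]]]; split.
    exists (s ** u), v; split; auto; asc.
  exists u, (v ** s); split; auto; asc.
Qed.

Definition G' g := [/\ S g, e ** g = g & g ** e = g].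

Lemma ginv a : G' a -> exists b, [/\ G' b, a ** b = e & b ** a = e].
Proof.
case=> Sa ea ae.
have [u [v [Su Sv Euv]]] := SxS Sa Se.
have SU : S (e ** u ** e) by auto.
have SV : S (e ** v ** e) by auto.
have eU : e ** (e ** u ** e) = e ** u ** e by asc; rewrite ee.
have Ue : (e ** u ** e) ** e = e ** u ** e by rewrite -Has ?ee; auto.
have eV : e ** (e ** v ** e) = e ** v ** e by asc; rewrite ee.
have Ve : (e ** v ** e) ** e = e ** v ** e by rewrite -Has ?ee; auto.
move: SU SV eU Ue eV Ve; set U := e ** u ** e; set V := e ** v ** e.
move=> SU SV eU Ue eV Ve.
have E : U ** a ** V = e.
  have -> : U ** a ** V = e ** u ** (e ** a ** e) ** v ** e by rewrite /U /V; asc.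
  idtac.
  rewrite ea ae.
  have -> : e ** u ** a ** v ** e = e ** (u ** a ** v) ** e by asc.
  by rewrite -Euv !ee; try sS.
clearbody U V.
exists (V ** U); split.
- split; auto; first by rewrite Has ?eV.
  by rewrite -Has ?Ue; try sS.
- apply: prim; auto.
  + have -> : a ** (V ** U) ** (a ** (V ** U)) = a ** (V ** e) ** U
      by rewrite -E; asc.
    by rewrite Ve ?Has; try sS.
  + by rewrite Has ?ea; try sS.
  + by rewrite -!Has ?Ue; try sS.
- apply: prim; auto.
  + have -> : V ** U ** a ** (V ** U ** a) = V ** (e ** U) ** a
      by rewrite -E; asc.
    by rewrite eU ?Has; try sS.
  + have -> : e ** (V ** U ** a) = (e ** V) ** U ** a by asc.
    by rewrite eV.
  + have -> : V ** U ** a ** e = V ** U ** (a ** e) by asc.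
    by rewrite ae.
Qed.

Definition inv a := epsilon (inhabits e) (fun b => [/\ G' b, a ** b = e & b ** a = e]).

Lemma invP a : G' a -> [/\ G' (inv a), a ** inv a = e & inv a ** a = e].
Proof. move=> Ga; apply: (epsilon_spec (inhabits e) _ (ginv Ga)). Qed.

Lemma inv_uniq a h : G' a -> G' h -> a ** h = e -> h = inv a.
Proof.
move=> Ga [Sh eh he] ah; have [[Si ei ie] ai ia] := invP Ga.
case: Ga => Sa _ _.
by rewrite -eh -ia -Has // ah ie; try sS.
Qed.

Lemma Gexe x : S x -> G' (e ** x ** e).
Proof.
move=> Sx; split; auto.
  by rewrite !Has ?ee; try sS.
by rewrite -Has ?ee; try sS.
Qed.

Definition k x := inv (e ** x ** e).

Lemma kP x : S x -> [/\ S (k x), e ** k x = k x, k x ** e = k x,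
   (e ** x ** e) ** k x = e & k x ** (e ** x ** e) = e].
Proof. by move=> Sx; have [[? ? ?] ? ?] := invP (Gexe Sx); split. Qed.

Lemma xkx x : S x -> x ** k x ** x = x.
Proof.
move=> Sx; have [Sk ek ke gk kg] := kP Sx.
move: Sk ek ke gk kg; set K := k x; clearbody K => Sk ek ke gk kg.
have [u [v [Su Sv Euv]]] := SxS Se Sx.
have Epq : e ** x ** e = (e ** u ** e) ** (e ** v ** e).
  have -> : (e ** u ** e) ** (e ** v ** e) = e ** u ** (e ** e) ** v ** e by asc.
  by rewrite ee Euv; asc.
have W : (e ** v ** e) ** K ** (e ** u ** e) = e.
  apply: prim; auto.
  - have -> : e ** v ** e ** K ** (e ** u ** e) ** (e ** v ** e ** K ** (e ** u ** e))
       = e ** v ** e ** (K ** ((e ** u ** e) ** (e ** v ** e))) ** K ** (e ** u ** e) by asc.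
    rewrite -Epq kg.
    have -> : e ** v ** e ** e ** K = e ** v ** e ** (e ** K) by asc.
    by rewrite ek; try sS.
  - have -> : e ** (e ** v ** e ** K ** (e ** u ** e)) = (e ** e) ** v ** e ** K ** (e ** u ** e) by asc.
    by rewrite ee.
  - have -> : e ** v ** e ** K ** (e ** u ** e) ** e = e ** v ** e ** K ** (e ** u ** (e ** e)) by asc.
    by rewrite ee.
have -> : x ** K ** x = x ** (e ** K ** e) ** x by rewrite ek ke.
rewrite Euv.
have -> : u ** e ** v ** (e ** K ** e) ** (u ** e ** v)
   = u ** (e ** v ** e ** K ** (e ** u ** e)) ** v by asc.
by rewrite W; try sS.
Qed.

Definition I' i := [/\ S i, i ** i = i, i ** e = i & e ** i = e].
Definition L' l := [/\ S l, l ** l = l, e ** l = l & l ** e = e].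

Lemma Ix x : S x -> I' (x ** k x).
Proof.
move=> Sx; have [Sk ek ke gk kg] := kP Sx; have X := xkx Sx.
move: Sk ek ke gk kg X; set K := k x; clearbody K => Sk ek ke gk kg X.
split; first sS.
- have -> : x ** K ** (x ** K) = (x ** K ** x) ** K by asc.
  by rewrite X.
- have -> : x ** K ** e = x ** (K ** e) by asc.
  by rewrite ke.
- have -> : e ** (x ** K) = e ** x ** e ** K by rewrite -{1}ek; asc.
  exact: gk.
Qed.

Lemma Lx x : S x -> L' (k x ** x).
Proof.
move=> Sx; have [Sk ek ke gk kg] := kP Sx; have X := xkx Sx.
move: Sk ek ke gk kg X; set K := k x; clearbody K => Sk ek ke gk kg X.
split; first sS.
- have -> : K ** x ** (K ** x) = K ** (x ** K ** x) by asc.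
  by rewrite X.
- have -> : e ** (K ** x) = e ** K ** x by asc.
  by rewrite ek.
- have -> : K ** x ** e = K ** (e ** x ** e) by rewrite -{1}ke; asc.
  exact: kg.
Qed.

Lemma recon x : S x -> x ** k x ** (e ** x ** e) ** (k x ** x) = x.
Proof.
move=> Sx; have [Sk ek ke gk kg] := kP Sx; have X := xkx Sx.
move: Sk ek ke gk kg X; set K := k x; clearbody K => Sk ek ke gk kg X.
have -> : x ** K ** (e ** x ** e) ** (K ** x) = x ** (K ** (e ** x ** e)) ** K ** x by asc.
rewrite kg.
have -> : x ** e ** K ** x = x ** (e ** K) ** x by asc.
by rewrite ek X.
Qed.

Lemma surj i g l : I' i -> G' g -> L' l ->
  [/\ e ** (i ** g ** l) ** e = g, (i ** g ** l) ** k (i ** g ** l) = i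
    & k (i ** g ** l) ** (i ** g ** l) = l].
Proof.
case=> Si ii ie ei [Sg eg ge] [Sl ll el le].
have Sx : S (i ** g ** l) by sS.
have Ex : e ** (i ** g ** l) ** e = g.
  have -> : e ** (i ** g ** l) ** e = (e ** i) ** g ** (l ** e) by asc.
  by rewrite ei le eg ge.
have [Sk ek ke gk kg] := kP Sx.
move: Sk ek ke gk kg; rewrite Ex; set K := k _; clearbody K => Sk ek ke gk kg.
split => //.
- have -> : i ** g ** l ** K = i ** g ** ((l ** e) ** K) by rewrite -{1}ek; asc.
  rewrite le ek.
  have -> : i ** g ** K = i ** (g ** K) by asc.
  by rewrite gk ie.
- have -> : K ** (i ** g ** l) = K ** (e ** i) ** g ** l by rewrite -{1}ke; asc.
  by rewrite ei ke kg el.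
Qed.

Lemma multL i z : I' i -> S z -> (i ** z) ** k (i ** z) = i.
Proof.
case=> Si ii ie ei Sz.
have E : e ** (i ** z) ** e = e ** z ** e.
  have -> : e ** (i ** z) ** e = (e ** i) ** z ** e by asc.
  by rewrite ei.
rewrite /k E; have [[Sk ek ke] gk kg] := invP (Gexe Sz).
move: Sk ek ke gk kg; set K := inv _; clearbody K => Sk ek ke gk kg.
have -> : i ** z ** K = (i ** e) ** z ** (e ** K) by rewrite ie ek.
have -> : i ** e ** z ** (e ** K) = i ** (e ** z ** e ** K) by asc.
by rewrite gk ie.
Qed.

Lemma multR l z : L' l -> S z -> k (z ** l) ** (z ** l) = l.
Proof.
case=> Sl ll el le Sz.
have E : e ** (z ** l) ** e = e ** z ** e.
  have -> : e ** (z ** l) ** e = e ** z ** (l ** e) by asc.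
  by rewrite le.
rewrite /k E; have [[Sk ek ke] gk kg] := invP (Gexe Sz).
move: Sk ek ke gk kg; set K := inv _; clearbody K => Sk ek ke gk kg.
have -> : K ** (z ** l) = (K ** e) ** z ** (e ** l) by rewrite ke el; asc.
have -> : K ** e ** z ** (e ** l) = K ** (e ** z ** e) ** l by asc.
by rewrite kg el.
Qed.

Lemma middle x y : S x -> S y ->
  e ** (x ** y) ** e = (e ** x ** e) ** ((k x ** x) ** (y ** k y)) ** (e ** y ** e).
Proof.
move=> Sx Sy; have [Skx ekx kex _ _] := kP Sx; have [Sky eky key _ _] := kP Sy.
have X := xkx Sx; have Y := xkx Sy.
move: Skx ekx kex X; set Kx := k x; clearbody Kx => Skx ekx kex X.
move: Sky eky key Y; set Ky := k y; clearbody Ky => Sky eky key Y.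
have -> : e ** x ** e ** (Kx ** x ** (y ** Ky)) ** (e ** y ** e)
  = e ** (x ** (e ** Kx) ** x) ** ((y ** (Ky ** e)) ** y) ** e by asc.
rewrite ekx key X Y; asc.
Qed.

End Alg.

Unset Implicit Arguments.
Set Strict Implicit.

Ltac bm := solve [repeat first [apply: BM_id | apply: BM_tupL | apply: BM_tupR | apply: BM_tcat]].

Theorem mainTheorem17
  (M : Type) (lt : M -> M -> Prop) (D : forall n, tset M n -> Prop)
  (Hom : o_minimal D lt) (Hch : definable_choice D) (Hsat : aleph1_saturated D)
  (n : nat) (S : tset M n) (mul : n.-tuple M -> n.-tuple M -> n.-tuple M)
  (HS : definable_semigroup D S mul) (Hcs : completely_simple S mul) :
  exists (p q r : nat) (I : tset M p) (G : tset M q) (Lam : tset M r)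
         (gmul : q.-tuple M -> q.-tuple M -> q.-tuple M)
         (P : r.-tuple M -> p.-tuple M -> q.-tuple M)
         (phi : n.-tuple M -> p.-tuple M * q.-tuple M * r.-tuple M),
    [/\ D _ I, D _ Lam & definable_group D G gmul] /\
        def_map D (fun w : (r + p).-tuple M => Lam (tupL w) /\ I (tupR w))
                  (fun w => P (tupL w) (tupR w)) /\
        (forall l i, Lam l -> I i -> G (P l i)) /\
        def_map D S (fun x => let: (i, g, l) := phi x in tcat i (tcat g l)) /\
        (forall x, S x -> let: (i, g, l) := phi x in [/\ I i, G g & Lam l]) /\
        (forall x y, S x -> S y -> phi x = phi y -> x = y) /\
        (forall i g l, I i -> G g -> Lam l -> exists x, S x /\ phi x = (i, g, l)) /\
        (forall x y, S x -> S y ->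
           let: (i, g, l) := phi x in let: (j, h, m) := phi y in
           phi (mul x y) = (i, gmul (gmul g (P l j)) h, m)).
Proof.
case: Hom => Hs _ _ Hpt _.
case: HS => DS Dgr Hcl Has.
case: Hcs => Hsimp [e He].
have Se := Se He; have ee := ee He.
have kP' := kP Hcl Has Hsimp He.
pose K := k S mul e.
pose IA := I' S mul e; pose GA := G' S mul e; pose LA := L' S mul e.
pose phi := fun x => (mul x (K x), mul (mul e x) e, mul (K x) x).
have DI : D _ IA.
  have H : D n (fun x => exists y, y = e /\ ((S x /\ S x /\ x = mul x x) /\
       (S x /\ S y /\ x = mul x y)) /\ (S y /\ S x /\ y = mul y x)).
    do 20 try first [ apply: (mulD Hs Dgr); bm | apply: (andD Hs) | apply: (exD Hs)
                 | apply: (eqcD Hs Hpt); bm ].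
  apply: (def_ext Hs H) => x; split.
    by case=> y [-> [[[Sx [_ xx]] [_ [_ xe]]] [_ [_ ex]]]]; split.
  by case=> Sx xx xe ex; exists e; do !split.
have DL : D _ LA.
  have H : D n (fun x => exists y, y = e /\ ((S x /\ S x /\ x = mul x x) /\
       (S y /\ S x /\ x = mul y x)) /\ (S x /\ S y /\ y = mul x y)).
    do 20 try first [ apply: (mulD Hs Dgr); bm | apply: (andD Hs) | apply: (exD Hs)
                 | apply: (eqcD Hs Hpt); bm ].
  apply: (def_ext Hs H) => x; split.
    by case=> y [-> [[[Sx [_ xx]] [_ [_ xe]]] [_ [_ ex]]]]; split.
  by case=> Sx xx xe ex; exists e; do !split.
have DG : D _ GA.
  have H : D n (fun x => exists y, y = e /\
       (S y /\ S x /\ x = mul y x) /\ (S x /\ S y /\ x = mul x y)).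
    do 20 try first [ apply: (mulD Hs Dgr); bm | apply: (andD Hs) | apply: (exD Hs)
                 | apply: (eqcD Hs Hpt); bm ].
  apply: (def_ext Hs H) => x; split.
    by case=> y [-> [[_ [Sx xx]] [_ [_ xe]]]]; split.
  by case=> Sx xx xe; exists e; do !split.
have GAS : forall g, GA g -> S g by move=> g [].
have IAS : forall g, IA g -> S g by move=> g [].
have LAS : forall g, LA g -> S g by move=> g [].
exists n, n, n, IA, GA, LA, mul, (fun l i => mul l i), phi.
split; [split => //; split|].
- split => //.
  + have H : D _ (fun z : ((n + n) + n).-tuple M =>
       (GA (tupL (tupL z)) /\ GA (tupR (tupL z))) /\
       (S (tupL (tupL z)) /\ S (tupR (tupL z)) /\ tupR z = mul (tupL (tupL z)) (tupR (tupL z)))).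
      apply: (andD Hs); first apply: (andD Hs); try (apply: (pullD Hs DG); bm).
      apply: (mulD Hs Dgr); bm.
    apply: (def_ext Hs H) => z; split.
      by case=> [[G1 G2] [_ [_ E]]].
    by case=> [[G1 G2] E]; do !split => //; auto.
  + move=> g h [Sg eg ge] [Sh eh he]; split; auto.
      by rewrite Has // eg.
    by rewrite -Has // he.
  + by move=> x y z /GAS ? /GAS ? /GAS ?; apply: Has.
- exists e; split.
  + by split.
  + by move=> g [Sg eg ge].
  + by move=> g Gg; have [h [Gh gh hg]] := ginv Hcl Has Hsimp He Gg; exists h.
split.
  have H : D _ (fun z : ((n + n) + n).-tuple M =>
     (LA (tupL (tupL z)) /\ IA (tupR (tupL z))) /\
     (S (tupL (tupL z)) /\ S (tupR (tupL z)) /\ tupR z = mul (tupL (tupL z)) (tupR (tupL z)))).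
    apply: (andD Hs); first apply: (andD Hs).
    - by apply: (pullD Hs DL); bm.
    - by apply: (pullD Hs DI); bm.
    apply: (mulD Hs Dgr); bm.
  apply: (def_ext Hs H) => z; split.
    by case=> [[G1 G2] [_ [_ E]]].
  by case=> [[G1 G2] E]; do !split => //; auto.
split.
  move=> l i [Sl ll el le] [Si ii ie ei]; split; auto.
    by rewrite Has // el.
  by rewrite -Has // ie.
split.
  have H : D _ (fun z : (n + (n + (n + n))).-tuple M => exists y, y = e /\
     (S (tupL z) /\
      (exists u, (S y /\ S (tupL z) /\ u = mul y (tupL z)) /\
                 (S u /\ S y /\ tupL (tupR (tupR z)) = mul u y)) /\
      (exists h, GA h /\
         (S (tupL (tupR (tupR z))) /\ S h /\ y = mul (tupL (tupR (tupR z))) h) /\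
         (S (tupL z) /\ S h /\ tupL (tupR z) = mul (tupL z) h) /\
         (S h /\ S (tupL z) /\ tupR (tupR (tupR z)) = mul h (tupL z))))).
    do 40 try first [ apply: (mulD Hs Dgr); bm | apply: (andD Hs) | apply: (exD Hs)
                 | apply: (eqcD Hs Hpt); bm | apply: (pullD Hs DS); bm
                 | apply: (pullD Hs DG); bm ].
  apply: (def_ext Hs H) => z /=.
  have Gx := Gexe Hcl Has He.
  split.
    case=> y [-> [SX [[u [[_ [_ Eu]] [_ [_ EGg]]]] [h [Gh [[SG [Sh Eh]] [[_ [_ EA]] [_ [_ EB]]]]]]]]].
    have EG : tupL (tupR (tupR z)) = mul (mul e (tupL z)) e by rewrite EGg Eu.
    have hK : h = K (tupL z).
      by apply: (inv_uniq Hcl Has Hsimp He (Gx _ SX) Gh); rewrite -EG.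
    split => //; apply/tcat_eq; split; first by rewrite EA hK.
    by apply/tcat_eq; split; [rewrite EG | rewrite EB hK].
  case=> SX /tcat_eq [EA /tcat_eq [EG EB]].
  have [Sk ek ke gk kg] := kP' _ SX.
  exists e; split => //; split => //; split.
    by exists (mul e (tupL z)); rewrite EG; do !split; auto.
  exists (K (tupL z)); split; first by split.
  by rewrite EG EA EB; do !split; auto.
split.
  move=> x Sx /=; split.
  - exact: (Ix Hcl Has Hsimp He Sx).
  - exact: (Gexe Hcl Has He Sx).
  - exact: (Lx Hcl Has Hsimp He Sx).
split.
  move=> x y Sx Sy [E1 E2 E3].
  by rewrite -(recon Hcl Has Hsimp He Sx) -(recon Hcl Has Hsimp He Sy) -/K E1 E2 E3.
split.
  move=> i g l Ii Gg Ll; exists (mul (mul i g) l); split.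
    by case: Ii => *; case: Gg => *; case: Ll => *; auto.
  have [E1 E2 E3] := surj Hcl Has Hsimp He Ii Gg Ll.
  by rewrite /phi -/K E2 E3 E1.
move=> x y Sx Sy /=.
have Skx : S (K x) by case: (kP' _ Sx).
have Sky : S (K y) by case: (kP' _ Sy).
rewrite /phi; congr (_, _, _).
- have -> : mul x y = mul (mul x (K x)) (mul (mul (mul (mul e x) e) (mul (K x) x)) y).
    rewrite -{1}(recon Hcl Has Hsimp He Sx) -/K.
    by rewrite !Has //; try solve [repeat apply Hcl; auto].
  apply: (multL Hcl Has Hsimp He); first exact: (Ix Hcl Has Hsimp He Sx).
  by repeat apply Hcl; auto.
- exact: (middle Hcl Has Hsimp He Sx Sy).
- have -> : mul x y = mul (mul x (mul (mul y (K y)) (mul (mul e y) e))) (mul (K y) y).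
    rewrite -{1}(recon Hcl Has Hsimp He Sy) -/K.
    by rewrite !Has //; try solve [repeat apply Hcl; auto].
  apply: (multR Hcl Has Hsimp He); first exact: (Lx Hcl Has Hsimp He Sy).
  by repeat apply Hcl; auto.
Qed.
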